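(* Let $\mathfrak g=\mathfrak g(V,\omega,D)$ be a generalized oscillator algebra and let $\lambda=(z^*,\alpha,t^* )\in\mathfrak g'$ be such that the coadjoint orbit $\mathcal O_\lambda$ is semi-equicontinuous. Suppose there exists $(z,x,t)$ in the interior $B(\mathcal O_\lambda)^0$ of $B(\mathcal O_\lambda)$ with $z^*t>0$. Then: (i) the symmetric bilinear form $Q:V\times V\to\mathbb R$, $Q(v,w):=\omega(Dv,w)$, is positive definite; (ii) $D^*\alpha=\alpha\circ D$ and all linear forms $i_x\omega=\omega(x,\cdot)$, $x\in V$, are $Q$-continuous, and $x\mapsto\|i_x\omega\|_Q$ is bounded on some $0$-neighborhood in $V$.
   Context: $(V,\omega)$ is a real locally convex space with a continuous non-degenerate alternating bilinear form $\omega$; $\gamma:\mathbb R\to\mathrm{Sp}(V,\omega)$ is a one-parameter group defining a smooth action of $\mathbb R$ on $V$, with generator $D=\gamma'(0)$. The generalized oscillator group $G=G(V,\omega,\gamma)=\mathbb R\times V\times\mathbb R$ has multiplication $(z,v,t)(z',v',t')=(z+z'+\frac12\omega(v,\gamma(t)v'),v+\gamma(t)v',t+t')$, and its Lie algebra $\mathfrak g(V,\omega,D)=\mathbb R\times V\times\mathbb R$ has bracket $[(z,v,t),(z',v',t')]=(\omega(v,v'),tDv'-t'Dv,0)$. Elements of $\mathfrak g'$ are written $\lambda=(z^*,\alpha,t^* )$ with $z^*,t^*\in\mathbb R$, $\alpha\in V'$, meaning $\lambda(z,x,t)=z^*z+\alpha(x)+t^*t$. Coadjoint orbits are $\mathcal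 O_\lambda=\mathrm{Ad}^*(G)\lambda$, $\mathrm{Ad}^*(g)\lambda=\lambda\circ\mathrm{Ad}(g)^{-1}$. For $E\subseteq\mathfrak g'$, $s_E(y)=\sup\langle E,-y\rangle$; $E$ is semi-equicontinuous if $s_E$ is bounded on a neighborhood of some point; $B(E)=\{y\in\mathfrak g:\inf\langle E,y\rangle>-\infty\}$. A linear form $\beta$ on $V$ is $Q$-continuous if $\|\beta\|_Q:=\sup\{\beta(v):Q(v,v)\le1\}<\infty$. *)

(* Defs.v *)
From HB Require Import structures.
From mathcomp Require Import all_boot all_order all_algebra.
From mathcomp Require Import all_classical all_reals all_analysis.
Set Implicit Arguments.
Unset Strict Implicit.
Unset Printing Implicit Defensive.
Import Order.TTheory GRing.Theory Num.Theory.
Local Open Scope ring_scope.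
Local Open Scope classical_set_scope.

Section Defs.
Context {R : realType}.

Definition has_dderiv {E F : tvsType R} (f : E -> F) (x h : E) (l : F) : Prop :=
  (fun s : R => s^-1 *: (f (x + s *: h) - f x)) @ 0^' --> l.

(** Bastiani C^k maps: C^0 = continuous; C^{k+1} = continuous, all directional
    derivatives df(x,h) exist and df : E x E -> F is C^k. *)
Fixpoint Ck (k : nat) {E F : tvsType R} (f : E -> F) : Prop :=
  match k with
  | 0 => continuous f
  | k.+1 => continuous f /\
      exists df : (E * E)%type -> F,
        (forall x h, has_dderiv f x h (df (x, h))) /\ Ck k df
  end.

Definition smooth {E F : tvsType R} (f : E -> F) : Prop := forall k, Ck k f.

Section Osc.
Context {V : tvsType R} (omega : V -> V -> R) (gamma : R -> V -> V).

Definition gmul (g h : R * V * R) : R * V * R :=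
  let: (z, v, t) := g in let: (z', v', t') := h in
  (z + z' + 2^-1 * omega v (gamma t v'), v + gamma t v', t + t').

Definition ginv (g : R * V * R) : R * V * R :=
  let: (z, v, t) := g in (- z, - gamma (- t) v, - t).

Definition gconj (g h : R * V * R) : R * V * R := gmul (gmul g h) (ginv g).

(** Coadjoint orbit of lam in g' (functionals on g = R x V x R):
    O_lam = { Ad^*(g) lam = lam o Ad(g)^-1 : g in G }, where Ad(g) = T_e(c_g)
    is the derivative of c_g at the identity e = (0,0,0) (G = R x V x R is its
    own global chart, g = T_e G).  mu = lam o Ad(g)^-1 is expressed as
    mu o Ad(g) = lam. *)
Definition coadjoint_orbit (lam : R * V * R -> R) : set (R * V * R -> R) :=
  [set mu : (R * V * R -> R) | exists (g : R * V * R) (Adg : R * V * R -> R * V * R),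
     (forall Y, has_dderiv (gconj g) 0 Y (Adg Y)) /\ (fun Y => mu (Adg Y)) = lam].

End Osc.

Definition dual_pt {V : tvsType R} (zs : R) (alpha : V -> R) (ts : R)
  : R * V * R -> R :=
  fun y => zs * y.1.1 + alpha y.1.2 + ts * y.2.

Section Supp.
Context {W : tvsType R}.

Definition support_fun (E : set (W -> R)) (y : W) : \bar R :=
  ereal_sup [set (mu (- y))%:E | mu in E].

Definition semi_equicontinuous (E : set (W -> R)) : Prop :=
  exists y0 : W, exists U : set W, nbhs y0 U /\
    exists M : R, forall y, U y ->
      (- M%:E <= support_fun E y)%E /\ (support_fun E y <= M%:E)%E.

Definition Bset (E : set (W -> R)) : set W :=
  [set y | (-oo < ereal_inf [set (mu y)%:E | mu in E])%E].

End Supp.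

Definition Qnorm {V : Type} (Q : V -> V -> R) (beta : V -> R) : \bar R :=
  ereal_sup [set (beta v)%:E | v in [set v | Q v v <= 1]].

Definition Q_continuous {V : Type} (Q : V -> V -> R) (beta : V -> R) : Prop :=
  (Qnorm Q beta < +oo)%E.

End Defs.

(* Main.v *)
Require Import Defs.
From HB Require Import structures.
From mathcomp Require Import all_boot all_order all_algebra.
From mathcomp Require Import all_classical all_reals all_analysis.
From mathcomp Require Import ring lra.
Import Order.TTheory GRing.Theory Num.Theory.
Local Open Scope ring_scope.
Local Open Scope classical_set_scope.

Section Tools.
Context {R : realType} {T : Type} {F : set_system T} {FF : Filter F} {V : tvsType R}.
Lemma tcvgD (f g : T -> V) a b : f @ F --> a -> g @ F --> b -> (fun x => f x + g x) @ F --> a + b.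
Proof.
move=> fa gb.
exact: (@continuous2_cvg _ _ _ _ _ _ f g (fun x y => x + y) _ _ (add_continuous (a, b)) fa gb).
Qed.
Lemma tcvgZ (k : T -> R^o) (f : T -> V) (r : R^o) a : k @ F --> r -> f @ F --> a -> (fun x => k x *: f x) @ F --> r *: a.
Proof.
move=> fa gb.
exact: (@continuous2_cvg _ (R^o) _ _ _ _ k f (fun x y => x *: y) _ _ (@scale_continuous R V (r, a)) fa gb).
Qed.
Lemma tcvgN (f : T -> V) a : f @ F --> a -> (fun x => - f x) @ F --> - a.
Proof.
move=> fa.
have -> : (fun x => - f x) = (fun x => (-1 : R^o) *: f x) by apply/funext => x; rewrite scaleN1r.
have H := tcvgZ (fun=> (-1:R^o)) f (-1) a (cvg_cst _) fa.
have E : (-1 : R^o) *: a = - a by rewrite scaleN1r.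
rewrite E in H. exact: H.
Qed.
Lemma tcvgB (f g : T -> V) a b : f @ F --> a -> g @ F --> b -> (fun x => f x - g x) @ F --> a - b.
Proof. by move=> fa gb; apply: tcvgD => //; apply: tcvgN. Qed.
End Tools.

Lemma quad (R : realFieldType) (m K L A : R) :
  (forall s, m <= K + s * L + s ^+ 2 * A) -> 0 <= A /\ (A = 0 -> L = 0).
Proof.
move=> H; split.
  rewrite leNgt; apply/negP => A0.
  pose B := - A.
  have B0 : 0 < B by rewrite /B oppr_gt0.
  pose P := `|L| + `|K| + `|m| + 1.
  pose N := P / B + 1.
  have hNB : N * B = P + B by rewrite /N mulrDl divfK ?mul1r // gt_eqF.
  have hP : 0 < P by rewrite /P; have := normr_ge0 L; have := normr_ge0 K; have := normr_ge0 m; lra.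
  have hN1 : 1 <= N by rewrite /N lerDr divr_ge0 // ltW.
  have := H N.
  have e1 : N ^+ 2 * A = - (N * (P + B)) by rewrite -hNB /B expr2; ring.
  rewrite e1.
  have hK : K <= `|K| := ler_norm K.
  have hm : - `|m| <= m by have := ler_norm (- m); rewrite normrN; lra.
  have hL : N * L <= N * `|L| by rewrite ler_wpM2l ?ler_norm // (le_trans ler01 hN1).
  have hQ : (`|K| + `|m| + 1) <= N * (`|K| + `|m| + 1).
    by rewrite ler_peMl // addr_ge0 // addr_ge0.
  have : N * B >= 0 by apply: mulr_ge0; [exact: (le_trans ler01 hN1)|exact: ltW].
  rewrite /P in hNB e1 *.
  nra.
move=> A0; apply/eqP; apply/negP => L0.
have := H ((m - K - 1) / L); rewrite A0 mulr0 addr0 divfK; [lra| exact/negP].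
Qed.

Section Osc.
Context (R : realType) (V : tvsType R)
  (omega : V -> V -> R) (gamma : R -> V -> V) (D : V -> V)
  (omega_cont : continuous (fun p : V * V => (omega p.1 p.2 : R^o)))
  (omega_linl : forall (a : R) (u v w : V),
      omega (a *: u + v) w = a * omega u w + omega v w)
  (omega_linr : forall (a : R) (u v w : V),
      omega u (a *: v + w) = a * omega u v + omega u w)
  (omega_alt : forall v : V, omega v v = 0)
  (omega_nondeg : forall v : V, (forall w : V, omega v w = 0) -> v = 0)
  (gamma_lin : forall (t a : R) (v w : V),
      gamma t (a *: v + w) = a *: gamma t v + gamma t w)
  (gamma0 : forall v : V, gamma 0 v = v)
  (D_gen : forall v : V, has_dderiv (fun t : R => gamma t v) 0 1 (D v))
  (zs ts : R) (alpha : V -> R)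
  (alpha_lin : forall (a : R) (v w : V), alpha (a *: v + w) = a * alpha v + alpha w).

Lemma self_add (M : zmodType) (x : M) : x = x + x -> x = 0.
Proof. by move=> h; apply: (@addrI _ x); rewrite addr0 -h. Qed.
Lemma omega0l w : omega 0 w = 0.
Proof. have := omega_linl 1 0 0 w; rewrite scaler0 addr0 mul1r; exact: self_add. Qed.
Lemma omega0r w : omega w 0 = 0.
Proof. have := omega_linr 1 w 0 0; rewrite scaler0 addr0 mul1r; exact: self_add. Qed.
Lemma omegaDl u v w : omega (u + v) w = omega u w + omega v w.
Proof. by have := omega_linl 1 u v w; rewrite scale1r mul1r. Qed.
Lemma omegaDr u v w : omega w (u + v) = omega w u + omega w v.
Proof. by have := omega_linr 1 w u v; rewrite scale1r mul1r. Qed.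
Lemma omegaZl a u w : omega (a *: u) w = a * omega u w.
Proof. by have := omega_linl a u 0 w; rewrite addr0 omega0l addr0. Qed.
Lemma omegaZr a u w : omega w (a *: u) = a * omega w u.
Proof. by have := omega_linr a w u 0; rewrite addr0 omega0r addr0. Qed.
Lemma omegaNl u w : omega (- u) w = - omega u w.
Proof. by rewrite -scaleN1r omegaZl mulN1r. Qed.
Lemma omegaNr u w : omega w (- u) = - omega w u.
Proof. by rewrite -scaleN1r omegaZr mulN1r. Qed.
Lemma omegaBl u v w : omega (u - v) w = omega u w - omega v w.
Proof. by rewrite omegaDl omegaNl. Qed.
Lemma omegaBr u v w : omega w (u - v) = omega w u - omega w v.
Proof. by rewrite omegaDr omegaNr. Qed.
Lemma omega_anti u v : omega u v = - omega v u.
Proof.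
have := omega_alt (u + v); rewrite omegaDl !omegaDr !omega_alt add0r addr0.
by move/eqP; rewrite addr_eq0 => /eqP.
Qed.

Lemma gamma_0 t : gamma t 0 = 0.
Proof. have := gamma_lin t 1 0 0; rewrite scaler0 addr0 scale1r; exact: self_add. Qed.
Lemma gammaDv t u v : gamma t (u + v) = gamma t u + gamma t v.
Proof. by have := gamma_lin t 1 u v; rewrite !scale1r. Qed.
Lemma gammaZv t a u : gamma t (a *: u) = a *: gamma t u.
Proof. by have := gamma_lin t a u 0; rewrite !addr0 gamma_0 addr0. Qed.
Lemma gammaNv t u : gamma t (- u) = - gamma t u.
Proof. by rewrite -scaleN1r gammaZv scaleN1r. Qed.

Lemma omega_cvg {T : Type} {F : set_system T} {FF : Filter F} (f g : T -> V) a b :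
  f @ F --> a -> g @ F --> b -> (fun x => (omega (f x) (g x) : R^o)) @ F --> (omega a b : R^o).
Proof.
move=> fa gb.
exact: (@continuous2_cvg _ _ _ (R^o) _ _ f g (fun x y => (omega x y : R^o)) _ _ (omega_cont (a, b)) fa gb).
Qed.


Lemma D_lim v : (fun s : R => s^-1 *: (gamma s v - v)) @ 0^' --> D v.
Proof.
have := D_gen v; rewrite /has_dderiv gamma0.
have e : forall s : R, gamma ((0 : R) + s *: (1 : R)) v = gamma s v.
  by move=> s; rewrite add0r; congr gamma; exact: mulr1.
under eq_fun => s do rewrite e.
by [].
Qed.

Lemma D_scale r v : D (r *: v) = r *: D v.
Proof.
apply/eqP; rewrite -subr_eq0; apply/eqP; apply: omega_nondeg => u.
rewrite omegaBl; apply/eqP; rewrite subr_eq0; apply/eqP.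
have h1 : (fun s : R => (omega (r *: (s^-1 *: (gamma s v - v))) u : R^o)) @ 0^' --> (omega (D (r *: v)) u : R^o).
  have e : (fun s : R => (omega (r *: (s^-1 *: (gamma s v - v))) u : R^o)) =
         (fun s : R => (omega (s^-1 *: (gamma s (r *: v) - r *: v)) u : R^o)).
    apply/funext => s; congr (omega _ u).
    by rewrite gammaZv -scalerBr !scalerA mulrC.
  rewrite e; apply: omega_cvg; [exact: D_lim | exact: cvg_cst].
have h2 : (fun s : R => (omega (r *: (s^-1 *: (gamma s v - v))) u : R^o)) @ 0^' --> (omega (r *: D v) u : R^o).
  apply: omega_cvg; last exact: cvg_cst.
  apply: tcvgZ; [exact: cvg_cst | exact: D_lim].
exact: (cvg_unique (@norm_hausdorff _ R^o) h1 h2).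
Qed.


Lemma qc_lim v (c : R) : (fun s : R => s^-1 *: (gamma (s * c) v - v)) @ 0^' --> c *: D v.
Proof.
have [->|c0] := eqVneq c 0.
  under eq_fun => s do rewrite mulr0 gamma0 subrr scaler0.
  rewrite scale0r; exact: cvg_cst.
have e : (fun s : R => s^-1 *: (gamma (s * c) v - v)) =
         (fun s : R => c *: ((fun t : R => t^-1 *: (gamma t v - v)) ((fun s : R => s * c) s))).
  by apply/funext => s /=; rewrite scalerA invfM mulrCA mulfV // mulr1.
rewrite e; apply: tcvgZ; first exact: cvg_cst.
apply: (cvg_comp (fun s : R => s * c) (fun t : R => t^-1 *: (gamma t v - v))); last exact: D_lim.
have inj : forall y : R, y * c = 0 * c -> y = 0.
  move=> y /eqP; rewrite mul0r mulf_eq0 (negbTE c0) orbF => /eqP //.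
have := @continuous_injective_withinNx R^o R^o (fun s => s * c) 0 (@mulrr_continuous _ c 0) inj.
by rewrite mul0r.
Qed.


Lemma gconj_formula v (h1 h3 : R) (h2 : V) :
  gconj omega gamma (0, v, 0) (h1, h2, h3) =
  (h1 + 2^-1 * omega v h2 - 2^-1 * omega (v + h2) (gamma h3 v), h2 + (v - gamma h3 v), h3).
Proof.
rewrite /gconj /gmul /ginv /= !oppr0 !add0r !addr0 !gamma0 gammaNv omegaNr.
congr (_, _, _).
- by rewrite mulrN.
- by rewrite addrA [v + h2]addrC.
Qed.


Definition Ad v (Y : R * V * R) : R * V * R :=
  (Y.1.1 + omega v Y.1.2 - 2^-1 * (Y.2 * omega v (D v)), Y.1.2 - Y.2 *: D v, Y.2).

Lemma Ad_deriv v Y : has_dderiv (gconj omega gamma (0, v, 0)) 0 Y (Ad v Y).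
Proof.
case: Y => [[a b] c]; rewrite /has_dderiv.
pose qs := fun s : R => s^-1 *: (gamma (s * c) v - v).
pose K := a + 2^-1 * omega v b - 2^-1 * omega b v.
pose RR := Real_sort__canonical__tvs_Tvs R.
pose E := fun s : R => ((K - 2^-1 * omega v (qs s) - 2^-1 * (s * omega b (qs s)) : RR), b - qs s, c : RR).
have hE : E @ 0^' --> (Ad v (a, b, c) : RR * V * RR).
  have -> : Ad v (a,b,c) = ((K - 2^-1 * omega v (c *: D v) - 2^-1 * (0 * omega b (c *: D v)) : R), b - c *: D v, c).
    rewrite /Ad /K /=; congr (_, _, _).
    rewrite mul0r mulr0 subr0 omegaZr (omega_anti b v). by field.
  have h1 : (fun s : R => (K - 2^-1 * omega v (qs s) - 2^-1 * (s * omega b (qs s)) : R^o)) @ 0^'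
     --> (K - 2^-1 * omega v (c *: D v) - 2^-1 * (0 * omega b (c *: D v)) : R^o).
    apply: cvgB; [apply: cvgB; [exact: cvg_cst|]|].
    - apply: cvgMl_tmp; apply: omega_cvg; [exact: cvg_cst| exact: qc_lim].
    - apply: cvgMl_tmp; apply: cvgM; last first.
        apply: omega_cvg; [exact: cvg_cst| exact: qc_lim].
      move=> P HP; exact: (@nbhs_dnbhs R^o 0 P HP).
  have h2 : (fun s : R => b - qs s) @ 0^' --> b - c *: D v.
    apply: tcvgB; [exact: cvg_cst| exact: qc_lim].
  exact: (cvg_pair (cvg_pair h1 h2) (cvg_cst _)).
suff H : {near 0^', E =1 (fun s : R => s^-1 *: (gconj omega gamma (0, v, 0) (0 + s *: ((a, b, c) : RR * V * RR)) - gconj omega gamma (0, v, 0) 0))}.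
  exact: (cvg_trans (near_eq_cvg H) hE).
apply: (filterS _ (nbhs_dnbhs_neq 0)) => s s0.
have g0 : gconj omega gamma (0, v, 0) 0 = 0.
  rewrite (_ : (0 : RR * V * RR) = (0, 0, 0)) // gconj_formula.
  by rewrite omega0r addr0 gamma0 omega_alt subrr mulr0 !addr0 subrr.
rewrite g0 subr0 add0r (_ : s *: ((a, b, c) : RR * V * RR) = (s * a, s *: b, s * c)) //.
rewrite gconj_formula /E.
have -> : forall (x1 x3 : RR) (x2 : V), s^-1 *: ((x1, x2, x3) : RR * V * RR) = (s^-1 * x1, s^-1 *: x2, s^-1 * x3) by [].
have hg : gamma (s * c) v = v + s *: qs s.
  by rewrite /qs scalerA mulfV // scale1r addrC subrK.
congr (_, _, _).
- rewrite hg /K; move: (qs s) => w.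
  rewrite omegaZr omegaDl !omegaDr !omegaZl !omegaZr omega_alt.
  by field.
- rewrite hg scalerDr scalerA mulVf // scale1r.
  by rewrite opprD addrA subrr add0r scalerN scalerA mulVf // scale1r.
- by rewrite mulKf.
Qed.

Lemma alpha0 : alpha 0 = 0.
Proof. have := alpha_lin 1 0 0; rewrite scaler0 addr0 mul1r; exact: self_add. Qed.
Lemma alphaD u w : alpha (u + w) = alpha u + alpha w.
Proof. by have := alpha_lin 1 u w; rewrite scale1r mul1r. Qed.
Lemma alphaZ r u : alpha (r *: u) = r * alpha u.
Proof. by have := alpha_lin r u 0; rewrite !addr0 alpha0 addr0. Qed.

Definition mu v : R * V * R -> R := fun Y =>
  dual_pt zs alpha ts (Y.1.1 - omega v Y.1.2 - 2^-1 * (Y.2 * omega v (D v)), Y.1.2 + Y.2 *: D v, Y.2).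

Lemma mu_orbit v : coadjoint_orbit omega gamma (dual_pt zs alpha ts) (mu v).
Proof.
exists (0, v, 0), (Ad v); split; first exact: Ad_deriv.
apply/funext => -[[a b] c]; rewrite /mu /Ad /dual_pt /=.
rewrite subrK omegaBr omegaZr; congr (zs * _ + _ + _).
by field.
Qed.

Lemma mu_eval s v (a c : R) (b : V) :
  mu (s *: v) (a, b, c) = (zs * a + alpha b + ts * c) + s * (c * alpha (D v) - zs * omega v b)
     + s ^+ 2 * (c * zs / 2 * omega (D v) v).
Proof.
rewrite /mu /dual_pt /= D_scale alphaD alphaZ alphaZ !omegaZl !omegaZr (omega_anti v (D v)).
by field.
Qed.

Lemma Bset_bound y : Bset (coadjoint_orbit omega gamma (dual_pt zs alpha ts)) y ->
  exists m : R, forall v, m <= mu v y.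
Proof.
rewrite /Bset /=; set S := [set _ | _ in _] => Hinf.
have lb : forall v, (ereal_inf S <= (mu v y)%:E)%E.
  move=> v; apply: ereal_inf_lbound; exists (mu v) => //; exact: mu_orbit.
move: Hinf lb; case: (ereal_inf S) => [r| |] //.
- by move=> _ lb; exists r => v; rewrite -lee_fin lb.
- by move=> _ /(_ 0); rewrite leNgt ltry.
Qed.

Lemma semi_bound y M :
  (support_fun (coadjoint_orbit omega gamma (dual_pt zs alpha ts)) y <= M%:E)%E ->
  forall v, mu v (- y) <= M.
Proof.
move=> h v; rewrite -lee_fin; apply: le_trans h.
apply: ereal_sup_ubound; exists (mu v) => //; exact: mu_orbit.
Qed.

Lemma Lbound (m a' c' : R) (b' : V) : (forall v, m <= mu v (a', b', c')) ->
  forall v, 0 <= omega (D v) v <= 1 ->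
  `|c' * alpha (D v) - zs * omega v b'| <= zs * a' + alpha b' + ts * c' + `|c' * zs / 2| - m.
Proof.
move=> hm v /andP[q0 q1].
have h1 := hm (1 *: v); have h2 := hm ((-1) *: v); rewrite !mu_eval in h1 h2.
move: h1 h2; rewrite expr1n sqrrN expr1n !mul1r mulN1r.
set L := c' * alpha (D v) - zs * omega v b'.
set k := c' * zs / 2; set Qv := omega (D v) v.
have hA : k * Qv <= `|k|.
  apply: le_trans (ler_norm _) _; rewrite normrM (ger0_norm q0).
  by rewrite ler_piMr.
rewrite ler_norml => h1 h2; apply/andP; split; lra.
Qed.

Lemma Ubound (M a' c' : R) (b' : V) : (forall v, mu v (a', b', c') <= M) ->
  forall v, 0 <= omega (D v) v <= 1 ->
  `|c' * alpha (D v) - zs * omega v b'| <= M - (zs * a' + alpha b' + ts * c') + `|c' * zs / 2|.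
Proof.
move=> hm v /andP[q0 q1].
have h1 := hm (1 *: v); have h2 := hm ((-1) *: v); rewrite !mu_eval in h1 h2.
move: h1 h2; rewrite expr1n sqrrN expr1n !mul1r mulN1r.
set L := c' * alpha (D v) - zs * omega v b'.
set k := c' * zs / 2; set Qv := omega (D v) v.
have hA : - `|k| <= k * Qv.
  rewrite lerNl; apply: le_trans (ler_norm _) _; rewrite normrN normrM (ger0_norm q0).
  by rewrite ler_piMr.
rewrite ler_norml => h1 h2; apply/andP; split; lra.
Qed.

Lemma Qnorm_le (beta : V -> R) B : (forall v, omega (D v) v <= 1 -> beta v <= B) ->
  (Qnorm (fun v w => omega (D v) w) beta <= B%:E)%E.
Proof. by move=> h; apply: ge_ereal_sup => _ [v qv <-]; rewrite lee_fin; exact: h. Qed.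

Lemma id_dnbhs : (fun e : R => (e : R^o)) @ 0^' --> (0 : R^o).
Proof. move=> P HP; exact: (@nbhs_dnbhs R^o 0 P HP). Qed.

Lemma main_aux (alpha_cont : continuous (alpha : V -> R^o))
  (Hsemi : semi_equicontinuous (coadjoint_orbit omega gamma (dual_pt zs alpha ts)))
  (Hint : exists y : R * V * R,
      interior (Bset (coadjoint_orbit omega gamma (dual_pt zs alpha ts))) y
      /\ 0 < zs * y.2) :
  let Q := fun v w : V => omega (D v) w in
  (forall v : V, v <> 0 -> 0 < Q v v) /\
  (Q_continuous Q (alpha \o D) /\ (forall x : V, Q_continuous Q (omega x)) /\
   exists U : set V, nbhs (0 : V) U /\
     exists M : R, forall x : V, U x -> (Qnorm Q (omega x) <= M%:E)%E).
Proof.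
move=> Q; set O := coadjoint_orbit omega gamma (dual_pt zs alpha ts).
pose RR := Real_sort__canonical__tvs_Tvs R.
case: Hint => -[[a b] c] [Hy Hc]; rewrite /= in Hc.
have By : Bset O (a, b, c) := nbhs_singleton Hy.
have [m1 hm1] := Bset_bound _ By.
have zs0 : zs != 0 by apply/eqP => z0; move: Hc; rewrite z0 mul0r ltxx.
have c0 : c != 0 by apply/eqP => z0; move: Hc; rewrite z0 mulr0 ltxx.
have kpos : 0 < c * zs / 2 by rewrite divr_gt0 // mulrC.
have pert : forall w, exists e : R, e != 0 /\ Bset O (a, b + e *: w, c).
  move=> w.
  have h2 : (fun e : R => b + e *: w) @ 0^' --> b.
    have := tcvgD _ _ b (0 *: w) (cvg_cst b) (tcvgZ (fun e : R => (e : R^o)) (fun=> w) 0 w id_dnbhs (cvg_cst w)).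
    move=> H; rewrite scale0r addr0 in H; exact: H.
  have cphi : (fun e : R => ((a, b + e *: w, c) : RR * V * RR)) @ 0^' --> ((a, b, c) : RR * V * RR).
    exact: (cvg_pair (cvg_pair (cvg_cst _) h2) (cvg_cst _)).
  have hN : \forall e \near 0^', Bset O (a, b + e *: w, c) := cphi _ Hy.
  have [e [He1 He2]] := filter_ex (filterI hN (@nbhs_dnbhs_neq RR 0)).
  by exists e.
have quadp : forall (m a' c' : R) (b' : V) v, (forall v', m <= mu v' (a', b', c')) ->
    0 <= c' * zs / 2 * omega (D v) v /\
    (c' * zs / 2 * omega (D v) v = 0 -> c' * alpha (D v) - zs * omega v b' = 0).
  move=> m a' c' b' v hm; apply: (@quad R m (zs * a' + alpha b' + ts * c')) => s.
  by rewrite -mu_eval; exact: hm.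
have qpos : forall v, 0 <= omega (D v) v.
  move=> v; have [A0 _] := quadp _ _ _ _ v hm1.
  by rewrite pmulr_rge0 in A0.
have qzero : forall v, omega (D v) v = 0 -> v = 0.
  move=> v Q0; apply: omega_nondeg => w.
  have [e [e0 Be]] := pert w.
  have [m2 hm2] := Bset_bound _ Be.
  have L1 := (quadp _ _ _ _ v hm1).2; rewrite Q0 mulr0 in L1; have {}L1 := L1 erefl.
  have L2 := (quadp _ _ _ _ v hm2).2; rewrite Q0 mulr0 in L2; have {}L2 := L2 erefl.
  rewrite omegaDr omegaZr in L2.
  have : (c * alpha (D v) - zs * omega v b) - (c * alpha (D v) - zs * (omega v b + e * omega v w)) = zs * e * omega v w by ring.
  rewrite L1 L2 subrr => /esym /eqP; rewrite !mulf_eq0 (negbTE zs0) (negbTE e0) /=.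
  by move/eqP.
split.
  move=> v v0; rewrite /Q lt_neqAle qpos andbT; apply/eqP => h; apply: v0; exact: qzero (esym h).
have Qb : forall v, Q v v <= 1 -> 0 <= omega (D v) v <= 1 by move=> v q1; rewrite qpos.
have ptw : forall x0, exists C, forall v, Q v v <= 1 -> `|omega x0 v| <= C.
  move=> x0; have [e [e0 Be]] := pert x0.
  have [m2 hm2] := Bset_bound _ Be.
  exists ((zs * a + alpha b + ts * c + `|c * zs / 2| - m1 + (zs * a + alpha (b + e *: x0) + ts * c + `|c * zs / 2| - m2)) / `|zs * e|).
  move=> v q1.
  have h1 := Lbound _ _ _ _ hm1 v (Qb v q1); have h2 := Lbound _ _ _ _ hm2 v (Qb v q1).
  rewrite ler_pdivlMr ?normr_gt0 ?mulf_neq0 // -normrM.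
  have -> : omega x0 v * (zs * e) = (c * alpha (D v) - zs * omega v (b + e *: x0)) - (c * alpha (D v) - zs * omega v b).
    by rewrite omegaDr omegaZr (omega_anti v x0); ring.
  by apply: le_trans (ler_normB _ _) _; rewrite addrC; apply: lerD.
have [Cb hCb] := ptw b.
have aD : forall v, Q v v <= 1 -> `|alpha (D v)| <= (zs * a + alpha b + ts * c + `|c * zs / 2| - m1 + `|zs| * Cb) / `|c|.
  move=> v q1; have h1 := Lbound _ _ _ _ hm1 v (Qb v q1).
  rewrite ler_pdivlMr ?normr_gt0 // -normrM mulrC.
  have -> : c * alpha (D v) = (c * alpha (D v) - zs * omega v b) + zs * omega v b by rewrite subrK.
  apply: le_trans (ler_normD _ _) _; apply: lerD => //.
  by rewrite normrM (omega_anti v b) normrN ler_wpM2l // hCb.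
split.
  apply: (le_lt_trans _ (ltry ((zs * a + alpha b + ts * c + `|c * zs / 2| - m1 + `|zs| * Cb) / `|c|))).
  by apply: Qnorm_le => v q1 /=; apply: le_trans (ler_norm _) (aD v q1).
split.
  move=> x0; have [C hC] := ptw x0.
  apply: (le_lt_trans _ (ltry C)).
  by apply: Qnorm_le => v q1 /=; apply: le_trans (ler_norm _) (hC v q1).
have [Ca hCa] : exists Ca, forall v, Q v v <= 1 -> `|alpha (D v)| <= Ca := ex_intro _ _ aD.
have alphaN : forall u, alpha (- u) = - alpha u by move=> u; rewrite -scaleN1r alphaZ mulN1r.
case: Hsemi => -[[y1 y2] y3] [U [hU [M hM]]].
have [C2 hC2] := ptw y2.
pose W := fun x : V => U ((y1, y2 + x, y3)) /\ `|alpha x| < 1.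
exists W; split.
  have h2 : (fun x : V => y2 + x) @ 0 --> y2.
    have := tcvgD _ _ y2 0 (cvg_cst y2) (@cvg_id _ (nbhs (0:V))).
    move=> H; rewrite addr0 in H; exact: H.
  have hpsi : (fun x : V => ((y1, y2 + x, y3) : RR * V * RR)) @ 0 --> ((y1, y2, y3) : RR * V * RR).
    exact: (cvg_pair (cvg_pair (cvg_cst _) h2) (cvg_cst _)).
  have hUn : \forall x \near (0:V), U ((y1, y2 + x, y3)) := hpsi _ hU.
  have hA : \forall x \near (0:V), `|alpha x| < 1.
    have H : (alpha : V -> R^o) @ (0:V) --> (alpha 0 : R^o) := alpha_cont 0.
    rewrite alpha0 in H.
    exact: (H _ (@nbhs0_lt _ R^o _ ltr01)).
  exact: filterI hUn hA.
exists ((M + zs * y1 + alpha y2 + ts * y3 + 1 + `|y3 * zs / 2| + `|y3| * Ca + `|zs| * C2) / `|zs|).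
move=> x [Ux ax]; apply: Qnorm_le => v q1 /=.
have hs := semi_bound _ _ (hM _ Ux).2.
have E : - ((y1, y2 + x, y3) : R * V * R) = (- y1, - (y2 + x), - y3) by [].
rewrite E in hs.
have h := Ubound _ _ _ _ hs v (Qb v q1).
rewrite omegaNr omegaDr alphaN alphaD in h.
rewrite (omega_anti x v).
have hoa : `|omega v y2| <= C2 by rewrite (omega_anti v y2) normrN; exact: hC2.
have had := hCa v q1.
move: h hoa had ax.
set oa := omega v y2; set ob := omega v x; set ad := alpha (D v) => h hoa had ax.
rewrite ler_pdivlMr ?normr_gt0 //.
have e1 : zs * ob = ((- y3) * ad - zs * - (oa + ob)) + y3 * ad - zs * oa by ring.
have t1 : `|zs * ob| <= `|(- y3) * ad - zs * - (oa + ob)| + `|y3 * ad| + `|zs * oa|.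
  rewrite e1; apply: le_trans (ler_normB _ _) _; apply: lerD => //; exact: ler_normD.
have t2 : `|y3 * ad| <= `|y3| * Ca by rewrite normrM ler_wpM2l.
have t3 : `|zs * oa| <= `|zs| * C2 by rewrite normrM ler_wpM2l.
have t4 : - ob * `|zs| <= `|zs * ob|.
  rewrite normrM [X in _ <= X]mulrC; apply: ler_wpM2r => //.
  rewrite -normrN; exact: ler_norm.
have t5 : `|(- y3) * zs / 2| = `|y3 * zs / 2| by rewrite mulNr mulNr normrN.
have t6 : alpha x <= 1 by apply: le_trans (ler_norm _) (ltW ax).
rewrite t5 in h.
lra.
Qed.

End Osc.

Theorem lemma2p6 (R : realType) (V : tvsType R)
  (omega : V -> V -> R) (gamma : R -> V -> V) (D : V -> V)
  (zs : R) (alpha : V -> R) (ts : R)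
  (* omega: continuous, bilinear, alternating, non-degenerate *)
  (omega_cont : continuous (fun p : V * V => (omega p.1 p.2 : R^o)))
  (omega_linl : forall (a : R) (u v w : V),
      omega (a *: u + v) w = a * omega u w + omega v w)
  (omega_linr : forall (a : R) (u v w : V),
      omega u (a *: v + w) = a * omega u v + omega u w)
  (omega_alt : forall v : V, omega v v = 0)
  (omega_nondeg : forall v : V, (forall w : V, omega v w = 0) -> v = 0)
  (* gamma : R -> Sp(V, omega), a one-parameter group *)
  (gamma_lin : forall (t a : R) (v w : V),
      gamma t (a *: v + w) = a *: gamma t v + gamma t w)
  (gamma_cont : forall t : R, continuous (gamma t))
  (gamma_sympl : forall (t : R) (v w : V), omega (gamma t v) (gamma t w) = omega v w)
  (gamma0 : forall v : V, gamma 0 v = v)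
  (gammaD : forall (s t : R) (v : V), gamma (s + t) v = gamma s (gamma t v))
  (* the action R x V -> V is smooth *)
  (gamma_smooth : smooth (fun p : R * V => gamma p.1 p.2))
  (* D = gamma'(0) is the generator *)
  (D_gen : forall v : V, has_dderiv (fun t : R => gamma t v) 0 1 (D v))
  (* lambda = (zs, alpha, ts) in the dual g' *)
  (alpha_lin : forall (a : R) (v w : V), alpha (a *: v + w) = a * alpha v + alpha w)
  (alpha_cont : continuous (alpha : V -> R^o))
  (Hsemi : semi_equicontinuous (coadjoint_orbit omega gamma (dual_pt zs alpha ts)))
  (Hint : exists y : R * V * R,
      interior (Bset (coadjoint_orbit omega gamma (dual_pt zs alpha ts))) y
      /\ 0 < zs * y.2) :
  let Q := fun v w : V => omega (D v) w in
  (forall v : V, v <> 0 -> 0 < Q v v) /\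
  (Q_continuous Q (alpha \o D) /\ (forall x : V, Q_continuous Q (omega x)) /\
   exists U : set V, nbhs (0 : V) U /\
     exists M : R, forall x : V, U x -> (Qnorm Q (omega x) <= M%:E)%E).
Proof.
exact: (@main_aux R V omega gamma D omega_cont omega_linl omega_linr omega_alt
  omega_nondeg gamma_lin gamma0 D_gen zs ts alpha alpha_lin alpha_cont Hsemi Hint).
Qed.
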